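(* There is an absolute constant $a>0$ such that the following holds. For any $c\ge 1$ and any $T$ with $8n<T\le \frac{n^2}{2048c^2}$, any (possibly randomized and adaptive) algorithm that, on every correlation clustering instance on $n$ vertices, outputs a clustering with expected cost at most $c\cdot\mathrm{OPT}+T$ must make at least $a\cdot\frac{n^3}{Tc^2}$ adaptive edge similarity queries, i.e. $\Omega\!\left(\frac{n^3}{Tc^2}\right)$ queries.
   Context: Correlation clustering: the input is $V=[n]$ and a complete graph on $V$ with edges labeled ``$+$'' or ``$-$''; $s(x,y)=1$ iff $\{x,y\}$ is a ``$+$'' edge. A clustering is a function $\ell:V\to\mathbb{N}$; its cost is $\sum_{\{x,y\}:\ell(x)=\ell(y)}(1-s(x,y))+\sum_{\{x,y\}:\ell(x)\neq\ell(y)}s(x,y)$, and $\mathrm{OPT}$ is the minimum cost over all clusterings of the instance. The algorithm has access to the instance only through edge similarity queries: querying a pair $(x,y)$ reveals $s(x,y)$; queries may be chosen adaptively based on previous answers. *)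

(* Defs.v *)
From Stdlib Require Import Reals List.
From mathcomp Require Import all_boot.

Set Implicit Arguments.
Unset Strict Implicit.
Unset Printing Implicit Defensive.

(* A correlation clustering instance on V = 'I_n: s x y = true iff {x,y} is a
   "+" edge.  The diagonal carries no information and is fixed to false. *)
Definition is_instance (n : nat) (s : 'I_n -> 'I_n -> bool) : Prop :=
  (forall x y, s x y = s y x) /\ (forall x, s x x = false).

(* A clustering is a labelling l : V -> nat.  Its cost counts, over unordered
   pairs {x,y} (x < y), the "-" edges inside clusters and the "+" edges
   between clusters. *)
Definition cc_cost (n : nat) (s : 'I_n -> 'I_n -> bool) (l : 'I_n -> nat) : nat :=
  \sum_(x < n) \sum_(y < n | x < y)
     (nat_of_bool (if l x == l y then ~~ s x y else s x y)).

Definition is_OPT (n : nat) (s : 'I_n -> 'I_n -> bool) (k : nat) : Prop :=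
  (exists l : 'I_n -> nat, cc_cost s l = k) /\
  (forall l : 'I_n -> nat, k <= cc_cost s l).

(* Deterministic adaptive query algorithm = decision tree.
   Query x y t_minus t_plus asks s(x,y) and continues with t_plus if the
   answer is "+" (true), with t_minus otherwise. *)
Inductive dtree (n : nat) : Type :=
| Leaf of ('I_n -> nat)
| Query of 'I_n & 'I_n & dtree n & dtree n.

Fixpoint run (n : nat) (s : 'I_n -> 'I_n -> bool) (t : dtree n)
  : ('I_n -> nat) * nat :=
  match t with
  | Leaf l => (l, 0)
  | Query x y t0 t1 =>
      let r := run s (if s x y then t1 else t0) in (r.1, r.2.+1)
  end.

(* A randomized adaptive algorithm: a finitely supported probability
   distribution over deterministic decision trees. *)
Definition valid_ralg (n : nat) (A : seq (R * dtree n)) : Prop :=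
  (forall p t, In (p, t) A -> Rle 0 p) /\
  fold_right (fun pt acc => Rplus (fst pt) acc) R0 A = R1.

Definition expected_cost (n : nat) (A : seq (R * dtree n))
  (s : 'I_n -> 'I_n -> bool) : R :=
  fold_right (fun pt acc =>
    Rplus (Rmult (fst pt) (INR (cc_cost s (run s (snd pt)).1))) acc) R0 A.

(* Main.v *)
Require Import Defs.
From Stdlib Require Import Reals List ZArith Lra Psatz.
From mathcomp Require Import all_boot zify.

Set Implicit Arguments.
Unset Strict Implicit.
Unset Printing Implicit Defensive.
Fixpoint fq (n : nat) (f : 'I_n) (s : 'I_n -> 'I_n -> bool) (t : dtree n) : nat :=
  match t with
  | Leaf _ => 0
  | Query x y t0 t1 => ((x == f) || (y == f)) + fq f s (if s x y then t1 else t0)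
  end.

Lemma sum_ge_const (W : seq nat) (F : nat -> nat) c :
  (forall j, j \in W -> c <= F j) -> size W * c <= \sum_(j <- W) F j.
Proof.
elim: W => [|x W IH] H; first by rewrite big_nil.
rewrite big_cons /=.
have h1 := H x (mem_head _ _).
have h2 : size W * c <= \sum_(j <- W) F j.
  apply: IH => j jW; apply: H; by rewrite inE jW orbT.
lia.
Qed.

Section Tree.
Variables (n : nat) (f : 'I_n) (g k : nat) (S : nat -> 'I_n -> 'I_n -> bool)
  (gz : 'I_n -> nat) (E : ('I_n -> nat) -> nat -> nat).
Hypothesis HS0 : forall j j' x y, x != f -> y != f -> S j x y = S j' x y.
Hypothesis HSf : forall j z, S j f z = (z != f) && (gz z == j).
Hypothesis HSf' : forall j z, S j z f = (z != f) && (gz z == j).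
Hypothesis HE : forall l j j', j != j' -> j < g -> j' < g -> k <= E l j + E l j'.

Lemma leafE l (W : seq nat) : uniq W -> (forall j, j \in W -> j < g) ->
  k * size W <= 2 * \sum_(j <- W) E l j + k.
Proof.
elim: W => [|x W IH] /= uW HW; first by rewrite big_nil; lia.
case/andP: uW => xW uW.
have HW' : forall j, j \in W -> j < g by move=> j jW; apply: HW; rewrite inE jW orbT.
have hx : x < g by apply: HW; rewrite inE eqxx.
rewrite big_cons.
case: (leqP k (2 * E l x)) => hk.
  have := IH uW HW'. lia.
have : size W * k <= \sum_(j <- W) (2 * E l j).
  apply: sum_ge_const => j jW.
  have jx : x != j by apply/eqP => exj; rewrite exj jW in xW.
  have := HE l jx hx (HW' j jW). lia.
rewrite -big_distrr /=. lia.
Qed.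

Lemma tree_main (t : dtree n) : forall W : seq nat, uniq W ->
  (forall j, j \in W -> j < g) ->
  exists r, [/\ r <= size W,
    2 * r * size W + r <= 2 * \sum_(j <- W) fq f (S j) t + r * r &
    k * size W <= 2 * \sum_(j <- W) E (run (S j) t).1 j + (r + 1) * k].
Proof.
elim: t => [l | x y t0 IH0 t1 IH1] W uW HW.
  exists 0; split => //=.
  by rewrite add0n mul1n; apply: leafE uW HW.
rewrite /=.
case: (boolP ((x != f) && (y != f))) => [/andP [xf yf] | hxy].
  set b := S 0 x y.
  have Hb : forall j, S j x y = b by move=> j; rewrite /b (HS0 j 0 xf yf).
  have [r [h1 h2 h3]] : exists r, [/\ r <= size W,
    2 * r * size W + r <= 2 * \sum_(j <- W) fq f (S j) (if b then t1 else t0) + r * r &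
    k * size W <= 2 * \sum_(j <- W) E (run (S j) (if b then t1 else t0)).1 j + (r + 1) * k].
    by case: b {Hb}; [apply: IH1 | apply: IH0].
  exists r; split => //.
    under eq_bigr => j _ do rewrite Hb.
    have -> : (x == f) || (y == f) = false by rewrite (negbTE xf) (negbTE yf).
    by [].
  by under eq_bigr => j _ do rewrite Hb.
have xyf : (x == f) || (y == f) by move: hxy; rewrite negb_and !negbK.
rewrite xyf.
set z := if x == f then y else x.
have Hz : forall j, S j x y = (z != f) && (gz z == j).
  move=> j; rewrite /z; case: (eqVneq x f) => [-> | xf]; first by rewrite HSf.
  move: xyf; rewrite (negbTE xf) /= => yf'. by rewrite (eqP yf') HSf' xf.
case: (boolP ((z != f) && (gz z \in W))) => [/andP [zf zW] | hz].
  set j1 := gz z.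
  have pW := perm_to_rem zW.
  rewrite !(perm_big _ pW) /= !big_cons.
  have uW' : uniq (rem j1 W) by apply: rem_uniq.
  have HW' : forall j, j \in rem j1 W -> j < g by move=> j /mem_rem; apply: HW.
  have [r [h1 h2 h3]] := IH0 (rem j1 W) uW' HW'.
  have Hrem : forall j, j \in rem j1 W -> S j x y = false.
    move=> j; rewrite (mem_rem_uniq _ uW) inE => /andP [jj1 _].
    by rewrite Hz zf /= eq_sym (negbTE jj1).
  have sz : size W = (size (rem j1 W)).+1 by rewrite (perm_size pW).
  exists r.+1; split.
  - by rewrite sz.
  - rewrite (eq_big_seq (fun j => 1 + fq f (S j) t0)); last first.
      by move=> j jW /=; rewrite (Hrem j jW).
    rewrite big_split /= sum1_size sz.
    move: h2; set w := size (rem j1 W); set F := \sum_(j <- _) _.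
    nia.
  - rewrite (eq_big_seq (fun j => E (run (S j) t0).1 j)); last first.
      by move=> j jW /=; rewrite (Hrem j jW).
    have aux : forall a b w, k*w <= 2*b + (r+1)*k -> k*w.+1 <= 2*(a+b) + (r.+1+1)*k by move=> *; lia.
    rewrite sz; exact: aux h3.
have Hno : forall j, j \in W -> S j x y = false.
  move=> j jW; rewrite Hz; apply/negP => /andP [zf /eqP zj].
  by move: hz; rewrite zf /= zj jW.
have [r [h1 h2 h3]] := IH0 W uW HW.
exists r; split => //.
  rewrite (eq_big_seq (fun j => 1 + fq f (S j) t0)); last first.
    by move=> j jW /=; rewrite (Hno j jW).
  rewrite big_split /=.
  have : \sum_(j <- W) 1 = size W by rewrite sum1_size.
  lia.
rewrite (eq_big_seq (fun j => E (run (S j) t0).1 j)) //.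
by move=> j jW /=; rewrite (Hno j jW).
Qed.
End Tree.

Definition grp (n k g : nat) (h : 'I_n -> nat) (x : 'I_n) : nat :=
  if x < g * k then x %/ k else h x.
Definition sim (n k g : nat) (h : 'I_n -> nat) (x y : 'I_n) : bool :=
  (x != y) && (grp k g h x == grp k g h y).
Definition updn (n : nat) (h : 'I_n -> nat) (f : 'I_n) (j : nat) : 'I_n -> nat :=
  fun x => if x == f then j else h x.
Definition err (n k g : nat) (l : 'I_n -> nat) (f : 'I_n) (j : nat) : nat :=
  \sum_(a < n | a < g * k) ((l a == l f) != (a %/ k == j)).

Lemma cnt_nat k g j : 0 < k -> \sum_(0 <= a < g * k) (a %/ k == j) = (j < g) * k.
Proof.
move=> k0; elim: g => [|g IH]; first by rewrite mul0n big_geq.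
rewrite mulSn addnC (big_cat_nat (n := g * k)) ?leq_addr //= IH.
rewrite (eq_big_nat _ _ (F2 := fun _ => (g == j) : nat)); last first.
  move=> a /andP [h1 h2].
  have -> : a %/ k = g.
    apply/eqP; rewrite eqn_leq leq_divRL // h1 andbT -ltnS ltn_divLR // mulSn addnC //.

  by [].
rewrite sum_nat_const_nat.
rewrite addKn; case: (ltngtP j g) => hjg.
- by rewrite (ltnW hjg : j < g.+1) /= muln0 addn0.
- have -> : (j < g.+1) = false by apply/negbTE; rewrite -leqNgt.
  by rewrite muln0.
- by rewrite hjg ltnSn /= mul1n mul0n add0n muln1.
Qed.

Lemma restrict_nat n m (F : nat -> nat) : m <= n ->
  \sum_(a < n | a < m) F a = \sum_(0 <= a < m) F a.
Proof.
move=> mn; rewrite -(big_mkord (fun a => a < m)) big_mkcond /=.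
rewrite (big_cat_nat (n := m)) //=.
rewrite [X in _ + X]big1_seq ?addn0; last first.
  move=> a /andP [_]; rewrite mem_index_iota => /andP [h _].
  by rewrite ltnNge h.
apply: eq_big_nat => a /andP [_ ->]; done.
Qed.

Lemma cnt_ord n k g j : 0 < k -> g * k <= n ->
  \sum_(a < n | a < g * k) (a %/ k == j) = (j < g) * k.
Proof. by move=> k0 gkn; rewrite (restrict_nat (fun a => (a %/ k == j) : nat) gkn) cnt_nat. Qed.

Lemma err_pair n k g (l : 'I_n -> nat) f j j' : 0 < k -> g * k <= n ->
  j != j' -> j < g -> k <= err k g l f j + err k g l f j'.
Proof.
move=> k0 gkn jj' jg.
apply: (leq_trans (_ : k <= \sum_(a < n | a < g * k) (a %/ k == j))).
  by rewrite (cnt_ord j k0 gkn) jg mul1n.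
rewrite /err -big_split /=.
apply: leq_sum => a _.
case: (eqVneq (a %/ k) j) => [e | ne]; last by [].
have -> : (a %/ k == j') = false by rewrite e (negbTE jj').
by case: (l a == l f).
Qed.

Lemma grp_upd_ne n k g (h : 'I_n -> nat) f j x : x != f ->
  grp k g (updn h f j) x = grp k g h x.
Proof. by move=> xf; rewrite /grp /updn (negbTE xf). Qed.

Lemma grp_upd_f n k g (h : 'I_n -> nat) (f : 'I_n) j : g * k <= f ->
  grp k g (updn h f j) f = j.
Proof. by move=> gkf; rewrite /grp /updn ltnNge gkf eqxx. Qed.

Lemma arith1 g k r F E : r <= g -> 2 * r * g + r <= 2 * F + r * r ->
  k * g <= 2 * E + (r + 1) * k -> k * g * g <= 2 * g * E + 2 * k * F + k * g.
Proof.
move=> h1 h2 h3.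
have a1 : k * (2 * r * g + r) <= k * (2 * F + r * r) by apply: leq_mul.
have a2 : g * (k * g) <= g * (2 * E + (r + 1) * k) by apply: leq_mul.
have a3 : k * r * r <= k * r * g by apply: leq_mul.
nia.
Qed.

Lemma per_f n k g (h : 'I_n -> nat) (f : 'I_n) (t : dtree n) : 0 < k -> g * k <= n -> g * k <= f ->
  k * g * g <= 2 * g * \sum_(0 <= j < g) err k g (run (sim k g (updn h f j)) t).1 f j
         + 2 * k * \sum_(0 <= j < g) fq f (sim k g (updn h f j)) t + k * g.
Proof.
move=> k0 gkn gkf.
have HS0 : forall j j' x y, x != f -> y != f ->
    sim k g (updn h f j) x y = sim k g (updn h f j') x y.
  move=> j j' x y xf yf; by rewrite /sim !grp_upd_ne.
have HSf : forall j z, sim k g (updn h f j) f z = (z != f) && (grp k g h z == j).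
  move=> j z; rewrite /sim grp_upd_f // eq_sym.
  case: (eqVneq z f) => [-> | zf] //=.
  by rewrite grp_upd_ne // eq_sym.
have HSf' : forall j z, sim k g (updn h f j) z f = (z != f) && (grp k g h z == j).
  move=> j z; rewrite /sim grp_upd_f //.
  case: (eqVneq z f) => [-> | zf] //=.
  by rewrite grp_upd_ne.
have HE : forall l j j', j != j' -> j < g -> j' < g -> k <= err k g l f j + err k g l f j'.
  move=> l j j' jj' jg j'g; exact: err_pair.
have HW : forall j, j \in iota 0 g -> j < g.
  by move=> j; rewrite mem_iota add0n => /andP [].
have [r [h1 h2 h3]] := @tree_main n f g k (fun j => sim k g (updn h f j)) (grp k g h)
  (fun l j => err k g l f j) HS0 HSf HSf' HE t (iota 0 g) (iota_uniq 0 g) HW.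
rewrite size_iota in h1 h2 h3.
rewrite /index_iota subn0; exact: arith1 h1 h2 h3.
Qed.
Definition updF (n g : nat) (h : {ffun 'I_n -> 'I_g}) (f : 'I_n) (j : 'I_g) : {ffun 'I_n -> 'I_g} :=
  [ffun x => if x == f then j else h x].

Definition sw (g : nat) (i j y : 'I_g) : 'I_g := if y == i then j else if y == j then i else y.

Lemma swK g (i j : 'I_g) : involutive (sw i j).
Proof.
move=> y; rewrite /sw.
case: (eqVneq y i) => [-> | yi]; first by rewrite eqxx; case: (eqVneq j i) => [-> | ji]; rewrite ?eqxx ?(negbTE ji).
case: (eqVneq y j) => [-> | yj]; first by rewrite eqxx.
by rewrite (negbTE yi) (negbTE yj).
Qed.

Lemma sw_eq g (i j y : 'I_g) : (sw i j y == i) = (y == j).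
Proof.
rewrite /sw.
case: (eqVneq y i) => [-> | yi].
  by rewrite eq_sym.
case: (eqVneq y j) => [yj | yj]; first by rewrite eqxx.
by rewrite (negbTE yi).
Qed.

Lemma reidx n g (f : 'I_n) (G : {ffun 'I_n -> 'I_g} -> nat) :
  \sum_h \sum_(j : 'I_g) G (updF h f j) = g * \sum_h G h.
Proof.
rewrite exchange_big /=.
transitivity (\sum_(j : 'I_g) g * \sum_(h : {ffun 'I_n -> 'I_g} | h f == j) G h).
  apply: eq_bigr => j _.
  rewrite (partition_big (fun h : {ffun 'I_n -> 'I_g} => h f) predT) //=.
  transitivity (\sum_(i : 'I_g) \sum_(h : {ffun 'I_n -> 'I_g} | h f == j) G h); last first.
    by rewrite sum_nat_const card_ord.
  apply: eq_bigr => i _.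
  pose rho (h : {ffun 'I_n -> 'I_g}) : {ffun 'I_n -> 'I_g} :=
    [ffun x => if x == f then sw i j (h x) else h x].
  have rhoK : involutive rho.
    move=> h; apply/ffunP => x; rewrite !ffunE.
    by case: (eqVneq x f) => // _; rewrite swK.
  rewrite (reindex_inj (inv_inj rhoK)) /=.
  apply: eq_big => h.
    by rewrite ffunE eqxx sw_eq.
  rewrite ffunE eqxx sw_eq => /eqP hf.
  have -> : updF (rho h) f j = h.
    apply/ffunP => x; rewrite !ffunE.
    by case: (eqVneq x f) => [-> | //]; rewrite hf.
  done.
rewrite -big_distrr /=; congr (_ * _).
by rewrite [RHS](partition_big (fun h : {ffun 'I_n -> 'I_g} => h f) predT).
Qed.

Definition hv (n g : nat) (h : {ffun 'I_n -> 'I_g}) : 'I_n -> nat := fun x => nat_of_ord (h x).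
Definition sH (n k g : nat) (h : {ffun 'I_n -> 'I_g}) := sim k g (hv h).

Lemma run_ext n (s s' : 'I_n -> 'I_n -> bool) t : (forall x y, s x y = s' x y) -> run s t = run s' t.
Proof. move=> e; elim: t => [l | x y t0 IH0 t1 IH1] //=; by rewrite e; case: (s' x y); [rewrite IH1 | rewrite IH0]. Qed.

Lemma fq_ext n f (s s' : 'I_n -> 'I_n -> bool) t : (forall x y, s x y = s' x y) -> fq f s t = fq f s' t.
Proof. move=> e; elim: t => [l | x y t0 IH0 t1 IH1] //=; by rewrite e; case: (s' x y); [rewrite IH1 | rewrite IH0]. Qed.

Lemma sim_upd n k g (h : {ffun 'I_n -> 'I_g}) f (j : 'I_g) x y :
  sim k g (updn (hv h) f j) x y = sH k (updF h f j) x y.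
Proof.
have e : forall z, grp k g (updn (hv h) f j) z = grp k g (hv (updF h f j)) z.
  by move=> z; rewrite /grp /updn /hv ffunE; case: (z == f).
by rewrite /sH /sim !e.
Qed.

Definition Gf (n k g : nat) (t : dtree n) (f : 'I_n) (h : {ffun 'I_n -> 'I_g}) : nat :=
  2 * g * err k g (run (sH k h) t).1 f (h f) + 2 * k * fq f (sH k h) t.

Lemma per_fH n k g (h : {ffun 'I_n -> 'I_g}) (f : 'I_n) (t : dtree n) : 0 < k -> g * k <= n -> g * k <= f ->
  k * g * g <= \sum_(j : 'I_g) Gf k t f (updF h f j) + k * g.
Proof.
move=> k0 gkn gkf.
have := per_f (hv h) t k0 gkn gkf.
rewrite /Gf big_split /= -!big_distrr /= !big_mkord.
congr (_ <= _ * _ + _ * _ + _).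
  apply: eq_bigr => j _; rewrite ffunE eqxx; congr err.
  by congr fst; apply: run_ext => x y; rewrite sim_upd.
by apply: eq_bigr => j _; apply: fq_ext => x y; rewrite sim_upd.
Qed.

Lemma per_fsum n k g (f : 'I_n) (t : dtree n) : 0 < k -> 0 < g -> g * k <= n -> g * k <= f ->
  #|{ffun 'I_n -> 'I_g}| * k * g <= \sum_(h : {ffun 'I_n -> 'I_g}) Gf k t f h + #|{ffun 'I_n -> 'I_g}| * k.
Proof.
move=> k0 g0 gkn gkf.
have H1 : \sum_(h : {ffun 'I_n -> 'I_g}) (k * g * g) <=
          \sum_(h : {ffun 'I_n -> 'I_g}) (\sum_(j : 'I_g) Gf k t f (updF h f j) + k * g).
  by apply: leq_sum => h _; apply: per_fH.
rewrite big_split /= reidx !sum_nat_const in H1.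
rewrite -(leq_pmul2l g0).
move: H1; set N := #|_|; set S := \sum_(h | _) _. clearbody N S. clear. nia.
Qed.

Lemma sum_bool_eq n (x : 'I_n) : \sum_(f < n) ((x == f) : nat) = 1.
Proof.
rewrite (bigD1 x) //= eqxx big1 // => f fx.
by rewrite eq_sym (negbTE fx).
Qed.

Lemma fq_total n (s : 'I_n -> 'I_n -> bool) t : \sum_(f < n) fq f s t <= 2 * (run s t).2.
Proof.
elim: t => [l | x y t0 IH0 t1 IH1] /=; first by rewrite big1.
rewrite big_split /=.
have h1 : \sum_(f < n) ((x == f) || (y == f) : nat) <= 2.
  apply: (leq_trans (_ : _ <= \sum_(f < n) ((x == f) + (y == f)))).
    by apply: leq_sum => f _; case: (x == f); case: (y == f).
  by rewrite big_split /= !sum_bool_eq.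
have h2 : \sum_(f < n) fq f s (if s x y then t1 else t0) <= 2 * (run s (if s x y then t1 else t0)).2.
  by case: (s x y).
apply: leq_trans (leq_add h1 h2) _. lia.
Qed.

Lemma cost_lb n k g (h : {ffun 'I_n -> 'I_g}) (l : 'I_n -> nat) :
  \sum_(f < n | g * k <= f) err k g l f (h f) <= cc_cost (sH k h) l.
Proof.
rewrite /err /cc_cost.
rewrite (exchange_big_dep (fun a : 'I_n => a < g * k)) /=; last by [].
rewrite [X in _ <= X](bigID (fun a : 'I_n => a < g * k)) /=.
apply: leq_trans (leq_addr _ _).
apply: leq_sum => a ha.
rewrite big_mkcond [X in _ <= X]big_mkcond /=.
apply: leq_sum => y _.
case: ifP => //= /andP [hy _].
have ay : a < y by apply: leq_trans ha hy.
rewrite ay.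
have -> : sH k h a y = (a %/ k == h y).
  rewrite /sH /sim /grp ha ltnNge hy /=.
  have -> : a != y by rewrite neq_ltn ay.
  done.
by case: (l a == l y); case: (a %/ k == h y).
Qed.

Lemma float_count n m c : m <= n -> \sum_(f < n | m <= f) c = (n - m) * c.
Proof.
move=> mn.
have e1 : \sum_(f < n) c = \sum_(f < n | f < m) c + \sum_(f < n | ~~ (f < m)) c.
  exact: bigID.
have e2 : \sum_(f < n | f < m) c = m * c.
  by rewrite (restrict_nat (fun _ => c) mn) sum_nat_const_nat subn0.
have e3 : \sum_(f < n) c = n * c by rewrite sum_nat_const card_ord.
have e4 : \sum_(f < n | m <= f) c = \sum_(f < n | ~~ (f < m)) c.
  by apply: eq_bigl => f; rewrite leqNgt.
rewrite e4 mulnBl; lia.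
Qed.

Lemma main_comb n k g (t : dtree n) : 0 < k -> 0 < g -> g * k <= n ->
  (n - g * k) * (#|{ffun 'I_n -> 'I_g}| * k * g) <=
  \sum_(h : {ffun 'I_n -> 'I_g}) (2 * g * cc_cost (sH k h) (run (sH k h) t).1 + 4 * k * (run (sH k h) t).2)
  + (n - g * k) * (#|{ffun 'I_n -> 'I_g}| * k).
Proof.
move=> k0 g0 gkn.
rewrite -!float_count //.
apply: leq_trans (_ : _ <= \sum_(f < n | g * k <= f) (\sum_(h : {ffun 'I_n -> 'I_g}) Gf k t f h + #|{ffun 'I_n -> 'I_g}| * k)) _.
  by apply: leq_sum => f hf; apply: per_fsum.
rewrite big_split /= leq_add2r exchange_big /=.
apply: leq_sum => h _.
rewrite /Gf big_split /= -!big_distrr /=.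
apply: leq_add.
  by rewrite leq_mul2l cost_lb orbT.
have : \sum_(f < n | g * k <= f) fq f (sH k h) t <= 2 * (run (sH k h) t).2.
  apply: leq_trans (fq_total _ _).
  rewrite [X in _ <= X](bigID (fun f : 'I_n => g * k <= f)) /=.
  exact: leq_addr.
move=> H; rewrite (_ : 4 * k = 2 * k * 2) ?leq_mul2l -?mulnA ?leq_mul2l ?H ?orbT //.
lia.
Qed.
Lemma exmax (T : finType) (x0 : T) (F : T -> nat) : exists y, forall x, F x <= F y.
Proof.
case: (@arg_maxnP T x0 predT F erefl) => y _ H.
by exists y => x; apply: H.
Qed.

Lemma sim_instance n k g (h : {ffun 'I_n -> 'I_g}) : is_instance (sH k h).
Proof.
split => [x y | x]; rewrite /sH /sim.
  by rewrite eq_sym [grp _ _ _ y == _]eq_sym.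
by rewrite eqxx.
Qed.

Lemma sim_opt n k g (h : {ffun 'I_n -> 'I_g}) : is_OPT (sH k h) 0.
Proof.
split; last by [].
exists (grp k g (hv h)).
rewrite /cc_cost big1 // => x _; rewrite big1 // => y xy.
rewrite /sH /sim.
have -> : x != y by rewrite neq_ltn xy.
by case: (grp k g (hv h) x == grp k g (hv h) y).
Qed.

Local Open Scope R_scope.

Definition wsum (n : nat) (A : seq (R * dtree n)) (X : dtree n -> R) : R :=
  fold_right (fun pt acc => Rplus (Rmult (fst pt) (X (snd pt))) acc) R0 A.
Definition psum (n : nat) (A : seq (R * dtree n)) : R :=
  fold_right (fun pt acc => Rplus (fst pt) acc) R0 A.

Lemma wsum_add n (A : seq (R * dtree n)) X Y :
  wsum A (fun t => X t + Y t) = wsum A X + wsum A Y.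
Proof. elim: A => [|[p t] A IH] /=; [ring | rewrite IH; ring]. Qed.

Lemma wsum0 n (A : seq (R * dtree n)) : wsum A (fun _ => 0) = 0.
Proof. elim: A => [|[p t] A IH] /=; [ring | rewrite IH; ring]. Qed.

Lemma wsum_ext n (A : seq (R * dtree n)) X Y : (forall t, X t = Y t) -> wsum A X = wsum A Y.
Proof. move=> e; elim: A => [|[p t] A IH] //=; by rewrite IH e. Qed.

Lemma INR_addn (a b : nat) : INR (a + b)%N = INR a + INR b.
Proof. exact: plus_INR. Qed.
Lemma INR_muln (a b : nat) : INR (a * b)%N = INR a * INR b.
Proof. exact: mult_INR. Qed.

Lemma wsum_big n (T : Type) (A : seq (R * dtree n)) (L : seq T) (C : T -> dtree n -> nat) :
  wsum A (fun t => INR (\sum_(h <- L) C h t)%N) =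
  fold_right (fun h acc => wsum A (fun t => INR (C h t)) + acc) 0 L.
Proof.
elim: L => [|h L IH] /=.
  rewrite -(wsum0 A); apply: wsum_ext => t; by rewrite big_nil.
rewrite -IH -wsum_add; apply: wsum_ext => t.
by rewrite big_cons INR_addn.
Qed.

Lemma fold_le (T : Type) (L : seq T) (F : T -> R) B : (forall h, F h <= B) ->
  fold_right (fun h acc => F h + acc) 0 L <= INR (size L) * B.
Proof.
move=> hF; elim: L => [|h L IH]; first by rewrite /=; lra.
have e : INR (size (h :: L)) = INR (size L) + 1 by exact: S_INR.
rewrite e; cbn [fold_right]; have := hF h; lra.
Qed.

Lemma psum_ge0 n (A : seq (R * dtree n)) : (forall p t, In (p, t) A -> 0 <= p) -> 0 <= psum A.
Proof.
elim: A => [|[p t] A IH] hA /=; first lra.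
have h1 := hA p t (or_introl erefl).
have h2 : 0 <= psum A by apply: IH => p' t' H; apply: (hA p' t'); right.
rewrite /psum /= in h2 *; lra.
Qed.

Lemma wsum_ge0 n (A : seq (R * dtree n)) X : (forall p t, In (p, t) A -> 0 <= p) ->
  (forall t, 0 <= X t) -> 0 <= wsum A X.
Proof.
move=> + hX; elim: A => [|[p t] A IH] hA /=; first lra.
have h1 := hA p t (or_introl erefl).
have h2 : 0 <= wsum A X by apply: IH => p' t' H; apply: (hA p' t'); right.
have := hX t. rewrite /wsum /= in h2 *; nra.
Qed.

Lemma best n (A : seq (R * dtree n)) (X : dtree n -> R) Y :
  (forall p t, In (p, t) A -> 0 <= p) -> (forall t, 0 <= X t) ->
  wsum A X <= Y * psum A -> 0 < psum A ->
  exists p t, In (p, t) A /\ 0 < p /\ X t <= Y.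
Proof.
move=> + hX; elim: A => [|[p0 t0] A IH] hA /=; first by rewrite /psum /=; lra.
have h1 := hA p0 t0 (or_introl erefl).
have hA' : forall p t, In (p, t) A -> 0 <= p by move=> p' t' H; apply: (hA p' t'); right.
rewrite /wsum /psum /= -/(wsum A X) -/(psum A) => hw hp.
case: (Rle_lt_dec (X t0) Y) => hXY.
  case: (Rle_lt_dec p0 0) => hp0.
    have e : p0 = 0 by lra.
    rewrite e in hw hp.
    have [p [t [H1 [H2 H3]]]] : exists p t, In (p, t) A /\ 0 < p /\ X t <= Y.
      apply: IH => //; lra.
    by exists p, t; split => //; right.
  by exists p0, t0; split => //; left.
have hps := psum_ge0 hA'.
have hws := wsum_ge0 hA' hX.
have hX0 := hX t0.
case: (Rle_lt_dec (psum A) 0) => hpA.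
  have e : psum A = 0 by lra.
  rewrite e in hw hp.
  have : p0 * X t0 <= Y * p0 by lra.
  move=> H; have : p0 * (X t0 - Y) <= 0 by lra.
  move=> H'; have : p0 = 0 by nra.
  move=> e0; rewrite e0 in hp; lra.
have [p [t [H1 [H2 H3]]]] : exists p t, In (p, t) A /\ 0 < p /\ X t <= Y.
  apply: IH => //; nra.
by exists p, t; split => //; right.
Qed.

Lemma real_final (nr T c kr gr mr L : R) : 1 <= c -> 8*nr < T -> T*2048 <= nr^2 -> 0 < nr ->
  16*T < kr*nr -> kr*nr <= 17*T -> nr < 2*kr*(gr+1) -> 2*kr*gr <= nr -> mr = nr - gr*kr ->
  mr*kr*gr <= 2*gr*T + 4*kr*L + mr*kr -> 0 <= gr ->
  1/2000 * (nr^3/(T*c^2)) <= L.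
Proof.
intros hc h1 h2 hn h3 h4 h5 h6 hm h7 hg.
assert (hT : 0 < T) by lra.
assert (hk : 0 < kr) by (apply (Rmult_lt_reg_r nr); lra).
assert (hm2 : 2*mr >= nr) by nra.
assert (hmk : mr*kr >= 8*T) by nra.
assert (hg1 : nr*nr < 34*T*(gr+1)).
{ assert (nr*nr < 2*kr*nr*(gr+1)) by nra. nra. }
assert (hg60 : gr >= 59).
{ assert (2048*T*34*(gr+1) > 2048 * nr*nr) by nra. nra. }
assert (hL1 : 4*kr*L >= mr*kr*(gr-1) - 2*gr*T) by lra.
assert (hL2 : 2*gr*T <= gr*mr*kr/4) by nra.
assert (hL3 : 4*kr*L >= mr*kr*gr/2) by nra.
assert (hL4 : 8*L >= mr*gr).
{ assert (kr*(8*L) >= kr*(mr*gr)) by nra. nra. }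
assert (hL5 : 16*L >= nr*gr) by nra.
assert (hg2 : nr*nr < 68*T*gr) by nra.
assert (hL6 : 1088*T*L >= nr^3) by nra.
assert (hc2 : c^2 >= 1) by nra.
assert (hD : 0 < T*c^2) by nra.
assert (hn3 : 0 < nr^3) by (apply pow_lt; lra).
assert (hL0 : 0 <= L) by nra.
assert (hTL : 0 <= T*L) by nra.
assert (hX : 2000*L*(T*c^2) >= 1088*T*L) by nra.
assert (H : nr^3 * /(T*c^2) <= 2000*L*(T*c^2) * /(T*c^2)).
{ apply Rmult_le_compat_r. left; apply Rinv_0_lt_compat; lra. lra. }
rewrite Rmult_assoc Rinv_r in H; last by apply: Rgt_not_eq.
unfold Rdiv; lra.
Qed.

Lemma leR (a b : nat) : (a <= b)%N -> INR a <= INR b.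
Proof. by move/leP; apply: le_INR. Qed.
Lemma ltR (a b : nat) : (a < b)%N -> INR a < INR b.
Proof. by move/ltP; apply: lt_INR. Qed.

Lemma size_ie (T : finType) : size (index_enum T) = #|T|.
Proof. by rewrite -sum1_size -sum1_card. Qed.

Theorem theorem4p1 :
  exists a : R, (0 < a) /\
  forall (n : nat) (c T : R) (A : seq (R * dtree n)),
    (1 <= c) ->
    (8 * INR n < T) ->
    (T <= INR n ^ 2 / (2048 * c ^ 2)) ->
    valid_ralg A ->
    (forall s : 'I_n -> 'I_n -> bool, is_instance s ->
       forall k : nat, is_OPT s k ->
       (expected_cost A s <= c * INR k + T)) ->
    exists s : 'I_n -> 'I_n -> bool, is_instance s /\
      exists (p : R) (t : dtree n), In (p, t) A /\ (0 < p) /\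
        (a * (INR n ^ 3 / (T * c ^ 2)) <= INR (run s t).2).
Proof.
exists (1/2000); split; first lra.
move=> n c T A hc hT1 hT2 [hA1 hA2] hcost.
have hn0 := pos_INR n.
have hT3 : T * 2048 <= INR n ^ 2.
  have e : INR n ^ 2 / (2048 * c ^ 2) * (2048 * c ^ 2) = INR n ^ 2.
    field; apply: Rgt_not_eq; lra.
  have hc2 : 1 <= c ^ 2 by nra.
  have : T * (2048 * c ^ 2) <= INR n ^ 2 / (2048 * c ^ 2) * (2048 * c ^ 2).
    apply: Rmult_le_compat_r => //; nra.
  rewrite e; nra.
have hn : 0 < INR n by nra.
set x := 16 * T / INR n.
have hx : x * INR n = 16 * T by rewrite /x; field; apply: Rgt_not_eq.
have [hup1 hup2] := archimed x.
have z0 : (0 < up x)%Z by apply: lt_0_IZR; nra.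
set k := Z.to_nat (up x).
have ek : INR k = IZR (up x) by rewrite INR_IZR_INZ Z2Nat.id //; apply: Z.lt_le_incl.
have hk1 : 16 * T < INR k * INR n by rewrite ek; nra.
have hk2 : INR k * INR n <= 17 * T by rewrite ek; nra.
have k0 : (0 < k)%N by apply/ltP; apply: INR_lt; rewrite ek /=; apply: IZR_lt.
set g := (n %/ (2 * k))%N.
have hg1 : (g * (2 * k) <= n)%N by apply: leq_trunc_div.
have hg2 : (n < g.+1 * (2 * k))%N by apply: ltn_ceil; rewrite muln_gt0.
have hg1R : INR g * (2 * INR k) <= INR n.
  by have := leR hg1; rewrite !INR_muln.
have hg2R : INR n < 2 * INR k * (INR g + 1).
  have := ltR hg2; rewrite !INR_muln -addn1 INR_addn /=; lra.
have g0 : (0 < g)%N.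
  case: (posnP g) => [eg | //].
  exfalso; rewrite eg /= in hg2R; nra.
have gkn : (g * k <= n)%N by nia.
pose N := #|{ffun 'I_n -> 'I_g}|.
have N0 : (0 < N)%N by rewrite /N card_ffun card_ord expn_gt0 g0.
have hNR : 0 < INR N by apply: (ltR N0).
pose cost (h : {ffun 'I_n -> 'I_g}) (t : dtree n) := cc_cost (sH k h) (run (sH k h) t).1.
have hexp : forall h : {ffun 'I_n -> 'I_g}, expected_cost A (sH k h) <= T.
  move=> h; have := hcost _ (sim_instance k h) 0%N (sim_opt k h).
  rewrite /= Rmult_0_r Rplus_0_l //.
have hw : wsum A (fun t => INR (\sum_(h <- index_enum {ffun 'I_n -> 'I_g}) cost h t)%N)
          <= INR N * T * psum A.
  rewrite wsum_big (_ : psum A = 1) // Rmult_1_r /N -size_ie.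
  by apply: fold_le => h; apply: hexp.
have [p [t [hin [hp hX]]]] := best hA1 (fun t => pos_INR _) hw
   (ltac:(rewrite (_ : psum A = 1) //; lra)).
have [hs hmax] := exmax [ffun => Ordinal g0] (fun h : {ffun 'I_n -> 'I_g} => (run (sH k h) t).2).
exists (sH k hs); split; first exact: sim_instance.
exists p, t; split => //; split => //.
have hm := main_comb t k0 g0 gkn.
rewrite big_split /= -!big_distrr /= in hm.
have hL : (\sum_(h : {ffun 'I_n -> 'I_g}) (run (sH k h) t).2 <= N * (run (sH k hs) t).2)%N.
  rewrite /N -sum_nat_const; apply: leq_sum => h _; exact: hmax.
have hm2 := leq_trans hm (leq_add (leq_add (leqnn _) (leq_mul (leqnn (4 * k)) hL)) (leqnn _)).
have hmR := leR hm2.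
rewrite !INR_addn !INR_muln (minus_INR _ _ (elimT leP gkn)) !INR_muln /= in hmR.
set Cr := INR (\sum_(h : {ffun 'I_n -> 'I_g}) cc_cost (sH k h) (run (sH k h) t).1)%N in hmR.
set Lr := INR (run (sH k hs) t).2 in hmR *.
have hC : Cr <= INR N * T by exact: hX.
have hg0 := pos_INR g.
have hk0 := pos_INR k.
have hL0 := pos_INR (run (sH k hs) t).2.
rewrite -/N in hmR.
set Nr := INR N in hmR hC hNR.
set mr := INR n - INR g * INR k in hmR.
have hgC : INR g * Cr <= INR g * (Nr * T) by apply: Rmult_le_compat_l.
have key : mr * INR k * INR g <= 2 * INR g * T + 4 * INR k * Lr + mr * INR k.
  apply: (Rmult_le_reg_l Nr) => //.
  nra.
apply: (real_final (kr := INR k) (gr := INR g) (mr := mr)) => //; try lra.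
Qed.
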